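(* Let $M_\lambda$ ($\lambda>0$) and $M$ be as in the context. Then $M_\lambda'(x)\to M'(x)$ as $\lambda\to0^+$, uniformly for $x$ in each compact subset of $[0,\infty)$.
   Context: For $\lambda>0$, $M_\lambda:[0,\infty)\to\mathbb R$ is defined by $M_\lambda(x)=0$ for $0\le x\le1$ and, for all $x>0$, $M_{\lambda}(x+1)=\int_0^x\frac{\lambda e^{-\lambda t}}{1-e^{-\lambda x}}\bigl(M_{\lambda}(t)+M_{\lambda}(x-t)\bigr)\,dt+1$. This is the expected number of intervals at saturation in the exponential parking problem. $M:[0,\infty)\to\mathbb R$ is defined by $M(x)=0$ for $0\le x\le1$ and, for $x>0$, $M(x+1)=\frac2x\int_0^xM(t)\,dt+1$. This is Rényi's expected number of intervals at saturation in the uniform parking problem. Derivatives are taken where they exist. Following the paper's convention, $M'_\lambda(x)=M'(x)=0$ on $(0,1)\cup(1,2)$; the points $x=1,2$, where the derivatives do not exist, are excluded. *)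

(* Defs.v *)
From Stdlib Require Import Reals.
From Coquelicot Require Import Coquelicot.
Open Scope R_scope.

Definition is_Renyi_M (M : R -> R) : Prop :=
  (forall x, x <= 1 -> M x = 0) /\
  (forall x, 0 < x -> M (x + 1) = 2 / x * RInt M 0 x + 1).

Definition is_exp_parking_M (lam : R) (Ml : R -> R) : Prop :=
  (forall x, x <= 1 -> Ml x = 0) /\
  (forall x, 0 < x ->
     Ml (x + 1) =
       RInt (fun t => lam * exp (- lam * t) / (1 - exp (- lam * x))
                        * (Ml t + Ml (x - t))) 0 x + 1).

(* Main.v *)
Require Import Defs.
From Stdlib Require Import Reals Lra ZArith.
From Coquelicot Require Import Coquelicot.
Open Scope R_scope.

Lemma loc_int (P : R -> Prop) x a b :
  a < x < b -> (forall z, a < z < b -> P z) -> locally x P.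
Proof.
  intros Hx HP.
  assert (He : 0 < Rmin (x - a) (b - x)) by (apply Rmin_pos; lra).
  exists (mkposreal _ He). intros y Hy. apply HP.
  change (Rabs (y - x) < Rmin (x - a) (b - x)) in Hy.
  apply Rabs_lt_between in Hy.
  destruct Hy as [H1 H2].
  pose proof (Rmin_l (x - a) (b - x)). pose proof (Rmin_r (x - a) (b - x)). lra.
Qed.

Lemma arch_nat (y : R) : exists k : nat, y < INR k.
Proof.
  destruct (archimed (Rabs y)) as [H1 _].
  exists (Z.to_nat (up (Rabs y))).
  rewrite INR_IZR_INZ, Z2Nat.id.
  - pose proof (Rle_abs y). lra.
  - apply le_IZR. pose proof (Rabs_pos y). lra.
Qed.

Definition Aint (lam : R) (N : R -> R) (x : R) :=
  RInt (fun t => exp (- lam * t) * N t) 0 x.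
Definition Bint (lam : R) (N : R -> R) (x : R) :=
  RInt (fun t => exp (lam * t) * N t) 0 x.
Definition Fint (lam : R) (N : R -> R) (x : R) :=
  exp (lam * x) * Aint lam N x + Bint lam N x.

Definition Gen (lam : R) (G : R -> R) (N : R -> R) : Prop :=
  (forall x, 0 < x -> continuous G x) /\ (forall x, x <= 1 -> N x = 0) /\
  (forall x, 0 < x -> ex_RInt (fun t => exp (- lam * t) * N t) 0 x ->
     ex_RInt (fun t => exp (lam * t) * N t) 0 x -> N (x + 1) = 1 + G x * Fint lam N x).

Lemma RInt_zero_fun (f : R -> R) x : 0 <= x <= 1 -> (forall t, 0 < t < x -> f t = 0) ->
  ex_RInt f 0 x /\ RInt f 0 x = 0.
Proof.
  intros Hx Hf.
  assert (E : forall t, Rmin 0 x < t < Rmax 0 x -> (fun _ => 0) t = f t).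
  { intros t Ht. rewrite Rmin_left in Ht by lra. rewrite Rmax_right in Ht by lra.
    symmetry; apply Hf; lra. }
  split.
  - eapply ex_RInt_ext. exact E. apply ex_RInt_const.
  - rewrite <- (RInt_ext _ _ _ _ E). rewrite RInt_const. apply (scal_zero_r (V:=R_NormedModule)).
Qed.

Lemma gen_one lam G N : Gen lam G N -> forall y, 1 < y <= 2 -> N y = 1.
Proof.
  intros [HG [H0 H1]] y Hy.
  replace y with ((y - 1) + 1) by ring.
  assert (Z : forall c, 0 < c -> ex_RInt (fun t => exp (c * t) * N t) 0 (y-1) /\
                  RInt (fun t => exp (c * t) * N t) 0 (y-1) = 0).
  { intros c _. apply RInt_zero_fun. lra. intros t Ht. rewrite H0 by lra. ring. }
  assert (Z' : forall c, ex_RInt (fun t => exp (c * t) * N t) 0 (y-1) /\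
                  RInt (fun t => exp (c * t) * N t) 0 (y-1) = 0).
  { intros c. apply RInt_zero_fun. lra. intros t Ht. rewrite H0 by lra. ring. }
  rewrite H1; [ | lra | apply Z' | apply Z'].
  unfold Fint, Aint, Bint. rewrite (proj2 (Z' (-lam))), (proj2 (Z' lam)). ring.
Qed.

Lemma cont_mult_R (f g : R -> R) x : continuous f x -> continuous g x ->
  continuous (fun t => f t * g t) x.
Proof. intros; apply (continuous_mult f g); auto. Qed.

Lemma cont_plus_R (f g : R -> R) x : continuous f x -> continuous g x ->
  continuous (fun t => f t + g t) x.
Proof. intros; apply (continuous_plus f g); auto. Qed.

Lemma cont_exp_lin c x : continuous (fun t => exp (c * t)) x.
Proof. apply (ex_derive_continuous (K:=R_AbsRing) (V:=R_NormedModule)). auto_derive. auto. Qed.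

Lemma gen_int lam G N n : Gen lam G N -> (forall y, 2 <= y < n -> continuous N y) ->
  forall f : R -> R, (forall t, continuous f t) ->
  forall z, 0 <= z < n -> ex_RInt (fun t => f t * N t) 0 z.
Proof.
  intros HGN Hc f Hf z Hz.
  pose proof (gen_one _ _ _ HGN) as H12.
  destruct HGN as [HG [H0 H1]].
  assert (I01 : forall z, 0 <= z <= 1 -> ex_RInt (fun t => f t * N t) 0 z).
  { intros w Hw. apply RInt_zero_fun. lra. intros t Ht. rewrite H0 by lra. ring. }
  assert (I12 : forall z, 1 <= z <= 2 -> ex_RInt (fun t => f t * N t) 1 z).
  { intros w Hw. eapply ex_RInt_ext.
    2: { apply (ex_RInt_continuous f). intros; apply Hf. }
    intros t Ht. rewrite Rmin_left in Ht by lra. rewrite Rmax_right in Ht by lra.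
    rewrite H12 by lra. apply eq_sym, Rmult_1_r. }
  destruct (Rle_lt_dec z 1) as [Hz1|Hz1]. { apply I01; lra. }
  apply (ex_RInt_Chasles _ 0 1 z). { apply I01; lra. }
  destruct (Rle_lt_dec z 2) as [Hz2|Hz2]. { apply I12; lra. }
  apply (ex_RInt_Chasles _ 1 2 z). { apply I12; lra. }
  apply (ex_RInt_continuous (V:=R_CompleteNormedModule)). intros t Ht.
  rewrite Rmin_left in Ht by lra. rewrite Rmax_right in Ht by lra.
  apply cont_mult_R. apply Hf. apply Hc. lra.
Qed.

Lemma cont_RInt0 (f : R -> R) x a b : a < x < b -> (forall z, a < z < b -> ex_RInt f 0 z) ->
  continuous (fun z => RInt f 0 z) x.
Proof.
  intros Hx Hi.
  apply (continuous_RInt_1 (V:=R_CompleteNormedModule) f 0 x).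
  apply (loc_int _ x a b Hx). intros z Hz. apply (RInt_correct (V:=R_CompleteNormedModule)). auto.
Qed.

Lemma cont_Fint lam N x a b : a < x < b ->
  (forall z, a < z < b -> ex_RInt (fun t => exp (- lam * t) * N t) 0 z) ->
  (forall z, a < z < b -> ex_RInt (fun t => exp (lam * t) * N t) 0 z) ->
  continuous (Fint lam N) x.
Proof.
  intros Hx I1 I2. unfold Fint, Aint, Bint.
  apply cont_plus_R. apply cont_mult_R. apply cont_exp_lin.
  apply (cont_RInt0 _ x a b Hx I1). apply (cont_RInt0 _ x a b Hx I2).
Qed.

Lemma cont_shift (N : R -> R) y : continuous (fun z => N (z + 1)) (y - 1) -> continuous N y.
Proof.
  intros H.
  apply (continuous_ext (fun w => N (w - 1 + 1))). { intros w. f_equal. ring. }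
  apply (continuous_comp (fun w => w - 1) (fun z => N (z + 1))).
  apply (ex_derive_continuous (K:=R_AbsRing) (V:=R_NormedModule)). auto_derive. auto.
  exact H.
Qed.

Lemma gen_cont_k lam G N : Gen lam G N -> forall k : nat, forall y, 2 <= y < 2 + INR k -> continuous N y.
Proof.
  intros HGN k. induction k as [|k IH].
  - simpl. intros; lra.
  - intros y Hy. rewrite S_INR in Hy.
    destruct (Rlt_le_dec y (2 + INR k)) as [Hyk|Hyk]. { apply IH; lra. }
    pose proof (pos_INR k) as Hk.
    set (n := 2 + INR k) in *. assert (En : n = 2 + INR k) by reflexivity. clearbody n.
    assert (Iexp : forall c z, 0 < z < n -> ex_RInt (fun t => exp (c * t) * N t) 0 z).
    { intros c z Hz. apply (gen_int lam G N n HGN IH (fun t => exp (c * t))).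
      intros; apply cont_exp_lin. lra. }
    destruct HGN as [HG [H0 H1]].
    apply cont_shift.
    apply (continuous_ext_loc (T:=R_UniformSpace) (U:=R_UniformSpace) _ (fun z => 1 + G z * Fint lam N z)).
    { apply (loc_int _ (y - 1) 0 n). lra.
      intros z Hz. symmetry. apply H1. lra. apply Iexp; lra. apply Iexp; lra. }
    apply cont_plus_R. apply continuous_const. apply cont_mult_R. apply HG. lra.
    apply (cont_Fint _ _ _ 0 n). lra.
    intros; apply Iexp; lra. intros; apply Iexp; lra.
Qed.

Lemma gen_cont lam G N : Gen lam G N -> forall y, 1 < y -> continuous N y.
Proof.
  intros HGN y Hy.
  destruct (Rlt_le_dec y 2) as [Hy2|Hy2].
  - apply (continuous_ext_loc (T:=R_UniformSpace) (U:=R_UniformSpace) _ (fun _ => 1)).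
    { apply (loc_int _ y 1 2). lra. intros z Hz. symmetry. apply (gen_one _ _ _ HGN). lra. }
    apply continuous_const.
  - destruct (arch_nat y) as [k Hk]. apply (gen_cont_k _ _ _ HGN k). pose proof (pos_INR k). lra.
Qed.

Lemma gen_int_all lam G N : Gen lam G N -> forall f : R -> R, (forall t, continuous f t) ->
  forall z, 0 <= z -> ex_RInt (fun t => f t * N t) 0 z.
Proof.
  intros HGN f Hf z Hz. apply (gen_int lam G N (z + 1) HGN); auto; try lra.
  intros y Hy. apply (gen_cont _ _ _ HGN). lra.
Qed.

Lemma gen_eq lam G N : Gen lam G N -> forall x, 0 < x -> N (x + 1) = 1 + G x * Fint lam N x.
Proof.
  intros HGN x Hx. pose proof HGN as [HG [H0 H1]]. apply H1. auto.
  apply (gen_int_all _ _ _ HGN (fun t => exp (- lam * t))). intros; apply cont_exp_lin. lra.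
  apply (gen_int_all _ _ _ HGN (fun t => exp (lam * t))). intros; apply cont_exp_lin. lra.
Qed.

Definition Dform lam (G N : R -> R) x :=
  - (G x)^2 * exp (lam * x) * Fint lam N x +
  G x * (lam * exp (lam * x) * Aint lam N x + (1 + exp (lam * x)) * N x).

Lemma der_RInt0 (f : R -> R) x : 0 < x -> (forall z, 0 <= z -> ex_RInt f 0 z) -> continuous f x ->
  is_derive (fun z => RInt f 0 z) x (f x).
Proof.
  intros Hx Hi Hc.
  apply (is_derive_RInt (V:=R_CompleteNormedModule) f _ 0 x); auto.
  apply (loc_int _ x 0 (x+1)). lra. intros z Hz.
  apply (RInt_correct (V:=R_CompleteNormedModule)). apply Hi. lra.
Qed.

Lemma der_shift (N : R -> R) (x D : R) : is_derive (fun z => N (z + 1)) x D -> is_derive N (x + 1) D.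
Proof.
  intros H.
  apply (is_derive_ext (fun w => N (w - 1 + 1))). { intros w. f_equal. ring. }
  replace D with (scal 1 D) by apply (scal_one (V:=R_NormedModule)).
  apply (is_derive_comp (fun z => N (z + 1)) (fun w => w - 1)).
  replace (x + 1 - 1) with x by ring. exact H.
  auto_derive. auto. ring.
Qed.

Lemma gen_deriv lam G N : Gen lam G N ->
  (forall x, 0 < x -> is_derive G x (- (G x)^2 * exp (lam * x))) ->
  forall x, 1 < x -> is_derive N (x + 1) (Dform lam G N x).
Proof.
  intros HGN HdG x Hx.
  assert (HA : is_derive (Aint lam N) x (exp (- lam * x) * N x)).
  { apply (der_RInt0 (fun t => exp (- lam * t) * N t)). lra.
    apply (gen_int_all _ _ _ HGN (fun t => exp (- lam * t))). intros; apply cont_exp_lin.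
    apply cont_mult_R. apply cont_exp_lin. apply (gen_cont _ _ _ HGN). lra. }
  assert (HB : is_derive (Bint lam N) x (exp (lam * x) * N x)).
  { apply (der_RInt0 (fun t => exp (lam * t) * N t)). lra.
    apply (gen_int_all _ _ _ HGN (fun t => exp (lam * t))). intros; apply cont_exp_lin.
    apply cont_mult_R. apply cont_exp_lin. apply (gen_cont _ _ _ HGN). lra. }
  assert (HG' := HdG x ltac:(lra)).
  apply der_shift.
  apply (is_derive_ext_loc (fun z => 1 + G z * (exp (lam * z) * Aint lam N z + Bint lam N z))).
  { apply (loc_int _ x 0 (x+1)). lra. intros z Hz. rewrite (gen_eq _ _ _ HGN) by lra. reflexivity. }
  evar (D : R).
  replace (Dform lam G N x) with D.
  - unfold D. auto_derive.
    + repeat split; eexists; eauto.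
    + reflexivity.
  - unfold D.
    replace (Derive (fun x0 : R => Aint lam N x0) x) with (exp (- lam * x) * N x)
      by (symmetry; apply is_derive_unique; exact HA).
    replace (Derive (fun x0 : R => Bint lam N x0) x) with (exp (lam * x) * N x)
      by (symmetry; apply is_derive_unique; exact HB).
    replace (Derive (fun x0 : R => G x0) x) with (- G x ^ 2 * exp (lam * x))
      by (symmetry; apply is_derive_unique; exact HG').
    unfold Dform, Fint. replace (- lam * x) with (- (lam * x)) by ring. rewrite exp_Ropp.
    field. apply Rgt_not_eq, exp_pos.
Qed.

Lemma RInt_reflect (f : R -> R) x : ex_RInt f 0 x ->
  ex_RInt (fun t => f (x - t)) 0 x /\ RInt (fun t => f (x - t)) 0 x = RInt f 0 x.
Proof.
  intros Hf.
  assert (E : ex_RInt f (-1 * 0 + x) (-1 * x + x)).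
  { replace (-1 * 0 + x) with x by ring. replace (-1 * x + x) with 0 by ring.
    apply ex_RInt_swap. exact Hf. }
  pose proof (ex_RInt_comp_lin f (-1) x 0 x E) as K1.
  pose proof (RInt_comp_lin f (-1) x 0 x E) as K2.
  replace (-1 * 0 + x) with x in K2 by ring. replace (-1 * x + x) with 0 in K2 by ring.
  assert (Ept : forall t, (fun t => f (x - t)) t = (fun y => opp (scal (-1) (f (-1 * y + x)))) t).
  { intros t. simpl. replace (-1 * t + x) with (x - t) by ring.
    unfold scal, opp; simpl. unfold mult; simpl. ring. }
  split.
  - apply (ex_RInt_ext (fun y => opp (scal (-1) (f (-1 * y + x))))).
    { intros t _. symmetry. apply Ept. }
    apply (ex_RInt_opp (V:=R_NormedModule)). exact K1.
  - rewrite (RInt_ext _ (fun y => opp (scal (-1) (f (-1 * y + x))))).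
    2: { intros t _. apply Ept. }
    rewrite (RInt_opp (V:=R_CompleteNormedModule)) by exact K1.
    etransitivity. apply f_equal. exact K2. rewrite <- (opp_RInt_swap (V:=R_CompleteNormedModule)) by exact Hf.
    apply (opp_opp (G:=R_AbelianGroup)).
Qed.


Lemma RInt_ext_R (f g : R -> R) a b : (forall x, Rmin a b < x < Rmax a b -> f x = g x) ->
  RInt f a b = RInt g a b.
Proof. intros H. apply (RInt_ext (V:=R_CompleteNormedModule)). exact H. Qed.

Lemma M_gen M : is_Renyi_M M -> Gen 0 (fun x => / x) M.
Proof.
  intros [H0 H1]. split; [|split]; auto.
  - intros x Hx. apply (ex_derive_continuous (K:=R_AbsRing) (V:=R_NormedModule)).
    auto_derive. lra.
  - intros x Hx _ _. rewrite H1 by exact Hx. unfold Fint, Aint, Bint.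
    rewrite (RInt_ext_R (fun t => exp (- 0 * t) * M t) M).
    2: { intros t _. replace (- 0 * t) with 0 by ring. rewrite exp_0. ring. }
    rewrite (RInt_ext_R (fun t => exp (0 * t) * M t) M).
    2: { intros t _. replace (0 * t) with 0 by ring. rewrite exp_0. ring. }
    replace (0 * x) with 0 by ring. rewrite exp_0. field. lra.
Qed.

Lemma exp_lin_pos lam x : 0 < lam -> 0 < x -> exp (lam * x) - 1 > 0.
Proof.
  intros. pose proof (exp_ineq1 (lam * x)). assert (0 < lam * x) by nra.
  specialize (H1 ltac:(lra)). lra.
Qed.

Lemma Ml_gen lam Ml : 0 < lam -> is_exp_parking_M lam Ml ->
  Gen lam (fun x => lam / (exp (lam * x) - 1)) Ml.
Proof.
  intros Hl [H0 H1]. split; [|split]; auto.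
  - intros x Hx. apply (ex_derive_continuous (K:=R_AbsRing) (V:=R_NormedModule)).
    auto_derive. pose proof (exp_lin_pos lam x Hl Hx). lra.
  - intros x Hx I1 I2. rewrite H1 by exact Hx.
    set (f1 := fun t => exp (- lam * t) * Ml t) in *.
    set (f2 := fun t => exp (lam * t) * Ml t) in *.
    set (c := lam / (1 - exp (- lam * x))).
    destruct (RInt_reflect f2 x I2) as [I3 E3].
    rewrite (RInt_ext_R _ (fun t => c * f1 t + (c * exp (- lam * x)) * f2 (x - t))).
    2: { intros t _. unfold f1, f2, c.
         assert (Ee : exp (- lam * x) * exp (lam * (x - t)) = exp (- lam * t))
           by (rewrite <- exp_plus; f_equal; ring).
         rewrite <- Ee. unfold Rdiv. ring. }
    rewrite (RInt_plus (V:=R_CompleteNormedModule) (fun t => c * f1 t) (fun t => (c * exp (- lam * x)) * f2 (x - t))).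
    2: { apply (ex_RInt_scal (V:=R_NormedModule) f1). exact I1. }
    2: { apply (ex_RInt_scal (V:=R_NormedModule) (fun t => f2 (x - t))). exact I3. }
    rewrite (RInt_scal (V:=R_CompleteNormedModule) f1) by exact I1.
    rewrite (RInt_scal (V:=R_CompleteNormedModule) (fun t => f2 (x - t))) by exact I3.
    rewrite E3. unfold Fint, Aint, Bint. fold f1 f2.
    unfold c. replace (- lam * x) with (- (lam * x)) by ring. rewrite exp_Ropp.
    pose proof (exp_lin_pos lam x Hl Hx). pose proof (exp_pos (lam * x)).
    unfold scal, plus; simpl. unfold mult; simpl.
    field. split; lra.
Qed.

Definition UC (F : R -> R -> R) (f : R -> R) (S : R -> Prop) :=
  forall eps, 0 < eps -> exists d, 0 < d /\
    forall l, 0 < l < d -> forall x, S x -> Rabs (F l x - f x) < eps.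
Definition Bnd (f : R -> R) (S : R -> Prop) := exists K, forall x, S x -> Rabs (f x) <= K.
Definition UCB F f S := UC F f S /\ Bnd f S.

Lemma Bnd_pos f S : Bnd f S -> exists K, 0 < K /\ forall x, S x -> Rabs (f x) <= K.
Proof.
  intros [K HK]. exists (Rabs K + 1). split. pose proof (Rabs_pos K); lra.
  intros x Hx. specialize (HK x Hx). pose proof (Rle_abs K). lra.
Qed.

Lemma UCB_sub F f (S S' : R -> Prop) : (forall x, S' x -> S x) -> UCB F f S -> UCB F f S'.
Proof.
  intros Hs [HU [K HK]]. split.
  - intros eps He. destruct (HU eps He) as [d [Hd H]]. exists d. split; auto.
  - exists K. auto.
Qed.

Lemma UCB_ext F F' f f' (S : R -> Prop) :
  (forall l x, 0 < l -> S x -> F l x = F' l x) -> (forall x, S x -> f x = f' x) ->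
  UCB F f S -> UCB F' f' S.
Proof.
  intros E1 E2 [HU [K HK]]. split.
  - intros eps He. destruct (HU eps He) as [d [Hd H]]. exists d. split; auto.
    intros l Hl x Hx. rewrite <- E1, <- E2 by (auto; lra). auto.
  - exists K. intros x Hx. rewrite <- E2 by auto. auto.
Qed.

Lemma UCB_const c S : UCB (fun _ _ => c) (fun _ => c) S.
Proof.
  split.
  - intros eps He. exists 1. split. lra. intros. unfold Rminus. rewrite Rplus_opp_r, Rabs_R0. auto.
  - exists (Rabs c). intros; lra.
Qed.

Lemma UCB_lam S : UCB (fun l _ => l) (fun _ => 0) S.
Proof.
  split.
  - intros eps He. exists eps. split. auto. intros l Hl x _. rewrite Rminus_0_r, Rabs_right; lra.
  - exists 0. intros. rewrite Rabs_R0. lra.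
Qed.

Lemma UCB_plus F f H h S : UCB F f S -> UCB H h S ->
  UCB (fun l x => F l x + H l x) (fun x => f x + h x) S.
Proof.
  intros [U1 B1] [U2 B2]. split.
  - intros eps He.
    destruct (U1 (eps/2) ltac:(lra)) as [d1 [Hd1 K1]].
    destruct (U2 (eps/2) ltac:(lra)) as [d2 [Hd2 K2]].
    exists (Rmin d1 d2). split. apply Rmin_pos; auto.
    intros l Hl x Hx. pose proof (Rmin_l d1 d2). pose proof (Rmin_r d1 d2).
    specialize (K1 l ltac:(lra) x Hx). specialize (K2 l ltac:(lra) x Hx).
    replace (F l x + H l x - (f x + h x)) with ((F l x - f x) + (H l x - h x)) by ring.
    eapply Rle_lt_trans. apply Rabs_triang. lra.
  - destruct B1 as [K1 B1], B2 as [K2 B2]. exists (K1 + K2). intros x Hx.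
    eapply Rle_trans. apply Rabs_triang. specialize (B1 x Hx). specialize (B2 x Hx). lra.
Qed.

Lemma UCB_mult F f H h S : UCB F f S -> UCB H h S ->
  UCB (fun l x => F l x * H l x) (fun x => f x * h x) S.
Proof.
  intros [U1 B1] [U2 B2].
  destruct (Bnd_pos _ _ B1) as [K1 [HK1 B1']]. destruct (Bnd_pos _ _ B2) as [K2 [HK2 B2']].
  split.
  - intros eps He.
    set (e1 := eps / (2 * (K2 + 1))).
    set (e2 := Rmin 1 (eps / (2 * (K1 + 1)))).
    assert (He1 : 0 < e1) by (unfold e1; apply Rdiv_lt_0_compat; lra).
    assert (He2 : 0 < e2) by (unfold e2; apply Rmin_pos; [lra | apply Rdiv_lt_0_compat; lra]).
    destruct (U1 e1 He1) as [d1 [Hd1 K1']].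
    destruct (U2 e2 He2) as [d2 [Hd2 K2']].
    exists (Rmin d1 d2). split. apply Rmin_pos; auto.
    intros l Hl x Hx. pose proof (Rmin_l d1 d2). pose proof (Rmin_r d1 d2).
    specialize (K1' l ltac:(lra) x Hx). specialize (K2' l ltac:(lra) x Hx).
    specialize (B1' x Hx). specialize (B2' x Hx).
    replace (F l x * H l x - f x * h x) with ((F l x - f x) * H l x + f x * (H l x - h x)) by ring.
    eapply Rle_lt_trans. apply Rabs_triang. rewrite !Rabs_mult.
    assert (HH : Rabs (H l x) <= K2 + 1).
    { replace (H l x) with (h x + (H l x - h x)) by ring.
      eapply Rle_trans. apply Rabs_triang. pose proof (Rmin_l 1 (eps / (2 * (K1 + 1)))). fold e2 in H2. lra. }
    assert (A1 : Rabs (F l x - f x) * Rabs (H l x) <= e1 * (K2 + 1)).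
    { apply Rmult_le_compat; try apply Rabs_pos; lra. }
    assert (A1' : e1 * (K2 + 1) = eps / 2) by (unfold e1; field; lra).
    assert (A2 : Rabs (f x) * Rabs (H l x - h x) <= K1 * e2).
    { apply Rmult_le_compat; try apply Rabs_pos; lra. }
    assert (A2' : K1 * e2 < eps / 2).
    { pose proof (Rmin_r 1 (eps / (2 * (K1 + 1)))). fold e2 in H2.
      apply Rle_lt_trans with (K1 * (eps / (2 * (K1 + 1)))). apply Rmult_le_compat_l; lra.
      replace (K1 * (eps / (2 * (K1 + 1)))) with ((eps / 2) * (K1 / (K1 + 1))) by (field; lra).
      assert (K1 / (K1 + 1) < 1). { apply (Rmult_lt_reg_r (K1 + 1)). lra. field_simplify; lra. }
      nra. }
    lra.
  - destruct B1 as [K1'' B1], B2 as [K2'' B2]. exists (K1 * K2). intros x Hx.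
    rewrite Rabs_mult. apply Rmult_le_compat; try apply Rabs_pos; auto.
Qed.

Lemma exp_up u : 0 <= u <= 1 -> 0 <= exp u - 1 <= 3 * u.
Proof.
  intros Hu. pose proof (exp_ineq1_le u). pose proof (exp_ineq1_le (- u)).
  rewrite exp_Ropp in H0. pose proof (exp_pos u).
  assert (exp u * (1 - u) <= 1).
  { apply (Rmult_le_compat_l (exp u)) in H0; [|lra]. rewrite Rinv_r in H0 by lra. lra. }
  assert (exp u <= 3). { eapply Rle_trans. 2: apply exp_le_3. destruct (Req_dec u 1). subst; lra.
    left. apply exp_increasing. lra. }
  nra.
Qed.

Lemma exp_down u : 0 <= u -> 0 <= 1 - exp (- u) <= u.
Proof.
  intros Hu. pose proof (exp_ineq1_le (- u)). split; [|lra].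
  destruct (Req_dec u 0). subst. rewrite Ropp_0, exp_0. lra.
  assert (exp (-u) < exp 0) by (apply exp_increasing; lra). rewrite exp_0 in H1. lra.
Qed.

Lemma UCB_exp n : UCB (fun l x => exp (l * x)) (fun x => exp (0 * x)) (fun x => 0 <= x <= n).
Proof.
  split.
  - intros eps He. assert (Hn : 0 < Rabs n + 1) by (pose proof (Rabs_pos n); lra).
    exists (Rmin (1 / (Rabs n + 1)) (eps / (3 * (Rabs n + 1)))).
    split. apply Rmin_pos; apply Rdiv_lt_0_compat; lra.
    intros l Hl x Hx. pose proof (Rmin_l (1 / (Rabs n + 1)) (eps / (3 * (Rabs n + 1)))).
    pose proof (Rmin_r (1 / (Rabs n + 1)) (eps / (3 * (Rabs n + 1)))).
    pose proof (Rle_abs n).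
    assert (Hlx : l * x <= l * (Rabs n + 1)) by nra.
    assert (Hl1 : l * (Rabs n + 1) < 1).
    { apply Rlt_le_trans with (1 / (Rabs n + 1) * (Rabs n + 1)). nra. right; field; lra. }
    assert (Hl2 : 3 * (l * (Rabs n + 1)) < eps).
    { apply Rlt_le_trans with (3 * (eps / (3 * (Rabs n + 1)) * (Rabs n + 1))). nra. right; field; lra. }
    replace (0 * x) with 0 by ring. rewrite exp_0.
    destruct (exp_up (l * x)) as [E1 E2]. split; nra.
    rewrite Rabs_right by lra. nra.
  - exists 1. intros. replace (0 * x) with 0 by ring. rewrite exp_0, Rabs_R1. lra.
Qed.

Lemma UCB_exp_neg n : UCB (fun l x => exp (- l * x)) (fun x => exp (- 0 * x)) (fun x => 0 <= x <= n).
Proof.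
  split.
  - intros eps He. assert (Hn : 0 < Rabs n + 1) by (pose proof (Rabs_pos n); lra).
    exists (eps / (Rabs n + 1)).
    split. apply Rdiv_lt_0_compat; lra.
    intros l Hl x Hx. pose proof (Rle_abs n).
    assert (Hl2 : l * (Rabs n + 1) < eps).
    { apply Rlt_le_trans with (eps / (Rabs n + 1) * (Rabs n + 1)). nra. right; field; lra. }
    replace (- 0 * x) with 0 by ring. rewrite exp_0.
    replace (- l * x) with (- (l * x)) by ring.
    destruct (exp_down (l * x)) as [E1 E2]. nra.
    rewrite Rabs_left1 by lra. nra.
  - exists 1. intros. replace (- 0 * x) with 0 by ring. rewrite exp_0, Rabs_R1. lra.
Qed.

Lemma UCB_G n : UCB (fun l x => l / (exp (l * x) - 1)) (fun x => / x) (fun x => 1 <= x <= n).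
Proof.
  split.
  - intros eps He. exists eps. split; auto. intros l Hl x Hx.
    set (u := l * x). assert (Hu : 0 < u) by (unfold u; nra).
    set (E := exp u - 1).
    pose proof (exp_ineq1_le u). pose proof (exp_ineq1_le (- u)).
    rewrite exp_Ropp in H0. pose proof (exp_pos u).
    assert (exp u * (1 - u) <= 1).
    { apply (Rmult_le_compat_l (exp u)) in H0; [|lra]. rewrite Rinv_r in H0 by lra. lra. }
    assert (HE1 : u <= E) by (unfold E; lra).
    assert (HE2 : E - u <= u * E) by (unfold E; nra).
    assert (Eq : l / E - / x = (u - E) / (x * E)) by (unfold u; field; lra).
    fold E. rewrite Eq. unfold Rdiv.
    assert (Hp : 0 < / (x * E)) by (apply Rinv_0_lt_compat; nra).
    assert (Hq : (u - E) * / (x * E) * (x * E) = u - E) by (field; lra).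
    rewrite Rabs_left1.
    + apply Rle_lt_trans with l; [|lra].
      assert (- ((u - E) * / (x * E)) * (x * E) <= l * (x * E)) by (unfold u in *; nra).
      apply Rmult_le_reg_r in H3; nra.
    + nra.
  - exists 1. intros x Hx. rewrite Rabs_right. 
    + replace 1 with (/ 1) by field. apply Rinv_le_contravar; lra.
    + left; apply Rinv_0_lt_compat; lra.
Qed.

Lemma RInt_minus_R (f g : R -> R) a b : ex_RInt f a b -> ex_RInt g a b ->
  RInt (fun t => f t - g t) a b = RInt f a b - RInt g a b.
Proof.
  intros H1 H2. apply (RInt_minus (V:=R_CompleteNormedModule) f g a b H1 H2).
Qed.

Lemma UCB_int F f n : UCB F f (fun t => 0 <= t <= n) ->
  (forall l x, 0 < l -> 0 <= x <= n -> ex_RInt (F l) 0 x) ->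
  (forall x, 0 <= x <= n -> ex_RInt f 0 x) ->
  UCB (fun l x => RInt (F l) 0 x) (fun x => RInt f 0 x) (fun x => 0 <= x <= n).
Proof.
  intros [U B] IF If.
  destruct (Bnd_pos _ _ B) as [K [HK HB]].
  split.
  - intros eps He. assert (Hn : 0 < Rabs n + 1) by (pose proof (Rabs_pos n); lra).
    destruct (U (eps / (2 * (Rabs n + 1)))) as [d [Hd Hu]].
    { apply Rdiv_lt_0_compat; lra. }
    exists d. split; auto. intros l Hl x Hx.
    assert (I1 : ex_RInt (F l) 0 x) by (apply IF; lra).
    assert (I2 : ex_RInt f 0 x) by (apply If; lra).
    rewrite <- (RInt_minus_R (F l) f 0 x I1 I2).
    eapply Rle_lt_trans. apply abs_RInt_le_const. lra.
    apply (ex_RInt_minus (V:=R_NormedModule) (F l) f); auto.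
    intros t Ht. left. apply (Hu l Hl t). lra.
    pose proof (Rle_abs n).
    apply Rle_lt_trans with ((Rabs n + 1) * (eps / (2 * (Rabs n + 1)))).
    apply Rmult_le_compat_r. left; apply Rdiv_lt_0_compat; lra. lra.
    replace ((Rabs n + 1) * (eps / (2 * (Rabs n + 1)))) with (eps / 2) by (field; lra). lra.
  - exists ((Rabs n) * K). intros x Hx.
    eapply Rle_trans. apply abs_RInt_le_const. lra. auto.
    intros t Ht. apply HB. lra.
    pose proof (Rle_abs n). apply Rmult_le_compat_r; lra.
Qed.

Lemma gen_bnd lam G N n : Gen lam G N -> Bnd N (fun x => x <= n).
Proof.
  intros HGN. pose proof (gen_one _ _ _ HGN) as H12. pose proof HGN as [_ [H0 _]].
  set (b := Rmax n 2).
  assert (Hb : 2 <= b) by apply Rmax_r.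
  assert (Hc : forall c, 2 <= c <= b -> continuity_pt N c).
  { intros c Hc. apply continuity_pt_filterlim. apply (gen_cont _ _ _ HGN). lra. }
  destruct (continuity_ab_maj N 2 b Hb Hc) as [xM [HM _]].
  destruct (continuity_ab_min N 2 b Hb Hc) as [xm [Hm _]].
  exists (1 + Rabs (N xM) + Rabs (N xm)). intros x Hx.
  pose proof (Rabs_pos (N xM)). pose proof (Rabs_pos (N xm)).
  destruct (Rle_lt_dec x 1). { rewrite H0 by lra. rewrite Rabs_R0. lra. }
  destruct (Rle_lt_dec x 2). { rewrite H12 by lra. rewrite Rabs_R1. lra. }
  assert (x <= b) by (pose proof (Rmax_l n 2); unfold b; lra).
  specialize (HM x ltac:(lra)). specialize (Hm x ltac:(lra)).
  pose proof (Rle_abs (N xM)). pose proof (Rle_abs (- N xm)). rewrite Rabs_Ropp in H4.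
  apply Rabs_le. lra.
Qed.

Definition Gl (l : R) := fun x => l / (exp (l * x) - 1).

Lemma UCB_parts n (Nf : R -> R -> R) N : 0 <= n ->
  (forall l, 0 < l -> Gen l (Gl l) (Nf l)) -> Gen 0 (fun x => / x) N ->
  UC Nf N (fun x => x <= n) ->
  UCB (fun l z => Aint l (Nf l) z) (Aint 0 N) (fun z => 0 <= z <= n) /\
  UCB (fun l z => Fint l (Nf l) z) (Fint 0 N) (fun z => 0 <= z <= n).
Proof.
  intros Hn HGl HG0 HU.
  assert (HN : UCB Nf N (fun t => 0 <= t <= n)).
  { apply (UCB_sub _ _ (fun x => x <= n)). intros; lra. split; auto. apply (gen_bnd _ _ _ _ HG0). }
  assert (UA : UCB (fun l z => Aint l (Nf l) z) (Aint 0 N) (fun z => 0 <= z <= n)).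
  { apply (UCB_int (fun l t => exp (- l * t) * Nf l t) (fun t => exp (- 0 * t) * N t) n).
    - apply (UCB_mult _ _ _ _ _ (UCB_exp_neg n) HN).
    - intros l x Hl Hx. apply (gen_int_all _ _ _ (HGl l Hl) (fun t => exp (- l * t))).
      intros; apply cont_exp_lin. lra.
    - intros x Hx. apply (gen_int_all _ _ _ HG0 (fun t => exp (- 0 * t))).
      intros; apply cont_exp_lin. lra. }
  assert (UB : UCB (fun l z => Bint l (Nf l) z) (Bint 0 N) (fun z => 0 <= z <= n)).
  { apply (UCB_int (fun l t => exp (l * t) * Nf l t) (fun t => exp (0 * t) * N t) n).
    - apply (UCB_mult _ _ _ _ _ (UCB_exp n) HN).
    - intros l x Hl Hx. apply (gen_int_all _ _ _ (HGl l Hl) (fun t => exp (l * t))).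
      intros; apply cont_exp_lin. lra.
    - intros x Hx. apply (gen_int_all _ _ _ HG0 (fun t => exp (0 * t))).
      intros; apply cont_exp_lin. lra. }
  split; auto.
  apply (UCB_plus _ _ _ _ _ (UCB_mult _ _ _ _ _ (UCB_exp n) UA) UB).
Qed.

Lemma conv_M (Mfam : R -> R -> R) M :
  (forall l, 0 < l -> Gen l (Gl l) (Mfam l)) -> Gen 0 (fun x => / x) M ->
  forall k : nat, UC Mfam M (fun x => x <= 2 + INR k).
Proof.
  intros HGl HG0 k. induction k as [|k IH].
  - intros eps He. exists 1. split. lra. intros l Hl x Hx. simpl in Hx.
    destruct (Rle_lt_dec x 1).
    + rewrite (proj1 (proj2 HG0)), (proj1 (proj2 (HGl l ltac:(lra)))) by lra.
      rewrite Rminus_0_r, Rabs_R0. lra.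
    + rewrite (gen_one _ _ _ HG0), (gen_one _ _ _ (HGl l ltac:(lra))) by lra.
      rewrite Rminus_eq_0, Rabs_R0. lra.
  - pose proof (pos_INR k) as Hk.
    set (n := 2 + INR k) in *. assert (En : n = 2 + INR k) by reflexivity. clearbody n.
    destruct (UCB_parts n Mfam M ltac:(lra) HGl HG0 IH) as [_ UF].
    assert (US : UCB (fun l z => 1 + Gl l z * Fint l (Mfam l) z) (fun z => 1 + / z * Fint 0 M z)
                   (fun z => 1 <= z <= n)).
    { apply (UCB_plus _ _ _ _ _ (UCB_const 1 _)).
      apply (UCB_mult _ _ _ _ _ (UCB_G n)).
      apply (UCB_sub _ _ (fun z => 0 <= z <= n)). intros; lra. exact UF. }
    intros eps He.
    destruct (IH eps He) as [d1 [Hd1 K1]].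
    destruct (proj1 US eps He) as [d2 [Hd2 K2]].
    exists (Rmin d1 d2). split. apply Rmin_pos; auto.
    intros l Hl x Hx. pose proof (Rmin_l d1 d2). pose proof (Rmin_r d1 d2).
    rewrite S_INR in Hx.
    destruct (Rle_lt_dec x n). { apply K1. lra. lra. }
    replace x with ((x - 1) + 1) by ring.
    rewrite (gen_eq _ _ _ HG0), (gen_eq _ _ _ (HGl l ltac:(lra))) by lra.
    apply K2. lra. lra.
Qed.

Lemma Gl_der l : 0 < l -> forall x, 0 < x -> is_derive (Gl l) x (- (Gl l x)^2 * exp (l * x)).
Proof.
  intros Hl x Hx. unfold Gl. pose proof (exp_lin_pos l x Hl Hx).
  auto_derive. lra. field. lra.
Qed.

Lemma inv_der : forall x, 0 < x -> is_derive (fun x => / x) x (- (/ x)^2 * exp (0 * x)).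
Proof.
  intros x Hx. auto_derive. lra. replace (0 * x) with 0 by ring. rewrite exp_0. field. lra.
Qed.

Lemma Derive_const_loc (N : R -> R) y a b c : a < y < b -> (forall z, a < z < b -> N z = c) ->
  Derive N y = 0.
Proof.
  intros Hy Hz. apply is_derive_unique.
  apply (is_derive_ext_loc (fun _ => c)).
  { apply (loc_int _ y a b Hy). intros z Hz'. symmetry. auto. }
  apply (is_derive_const (K:=R_AbsRing) (V:=R_NormedModule)).
Qed.

Theorem lemma2 (Mfam : R -> R -> R) (M : R -> R)
  (HM : is_Renyi_M M)
  (HMl : forall lam, 0 < lam -> is_exp_parking_M lam (Mfam lam)) :
  forall b, 0 <= b ->
  forall eps, 0 < eps ->
  exists delta, 0 < delta /\
    forall lam, 0 < lam -> lam < delta ->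
    forall x, 0 <= x <= b -> x <> 1 -> x <> 2 ->
      Rabs (Derive (Mfam lam) x - Derive M x) < eps.
Proof.
  intros b Hb eps He.
  assert (HG0 : Gen 0 (fun x => / x) M) by (apply M_gen; auto).
  assert (HGl : forall l, 0 < l -> Gen l (Gl l) (Mfam l)) by (intros; apply Ml_gen; auto).
  destruct (arch_nat b) as [k Hk].
  assert (HU : UC Mfam M (fun x => x <= b)).
  { intros e He'. destruct (conv_M Mfam M HGl HG0 k e He') as [d [Hd H]].
    exists d. split; auto. intros l Hl x Hx. apply H; auto. lra. }
  destruct (UCB_parts b Mfam M Hb HGl HG0 HU) as [UA UF].
  assert (HN : UCB Mfam M (fun x => 1 <= x <= b)).
  { apply (UCB_sub _ _ (fun x => x <= b)). intros; lra. split; auto. apply (gen_bnd _ _ _ _ HG0). }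
  assert (UE : UCB (fun l x => exp (l * x)) (fun x => exp (0 * x)) (fun x => 1 <= x <= b)).
  { apply (UCB_sub _ _ (fun x => 0 <= x <= b)). intros; lra. apply UCB_exp. }
  assert (UA' : UCB (fun l z => Aint l (Mfam l) z) (Aint 0 M) (fun x => 1 <= x <= b)).
  { apply (UCB_sub _ _ (fun x => 0 <= x <= b)). intros; lra. auto. }
  assert (UF' : UCB (fun l z => Fint l (Mfam l) z) (Fint 0 M) (fun x => 1 <= x <= b)).
  { apply (UCB_sub _ _ (fun x => 0 <= x <= b)). intros; lra. auto. }
  pose proof (UCB_G b) as UG.
  assert (UD : UCB (fun l z => Dform l (Gl l) (Mfam l) z) (Dform 0 (fun x => / x) M)
                 (fun z => 1 <= z <= b)).
  { eapply UCB_ext.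
    3: { apply UCB_plus.
         - apply UCB_mult. apply UCB_mult. apply UCB_mult. apply (UCB_const (-1)).
           apply UCB_mult. exact UG. exact UG. exact UE. exact UF'.
         - apply UCB_mult. exact UG. apply UCB_plus.
           apply UCB_mult. apply UCB_mult. apply UCB_lam. exact UE. exact UA'.
           apply UCB_mult. apply UCB_plus. apply (UCB_const 1). exact UE. exact HN. }
    - intros l x _ _. unfold Dform, Gl. cbv beta. ring.
    - intros x _. unfold Dform. ring. }
  destruct (proj1 UD eps He) as [d [Hd HD]].
  exists d. split; auto. intros l Hl Hld x Hx Hx1 Hx2.
  pose proof HG0 as [_ [H00 _]]. pose proof (HGl l Hl) as [_ [H0l _]].
  destruct (Rlt_le_dec x 1).
  - rewrite (Derive_const_loc (Mfam l) x (x - 1) 1 0), (Derive_const_loc M x (x - 1) 1 0).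
    rewrite Rminus_0_r, Rabs_R0. lra.
    lra. intros; apply H00; lra. lra. intros; apply H0l; lra.
  - destruct (Rlt_le_dec x 2).
    + rewrite (Derive_const_loc (Mfam l) x 1 2 1), (Derive_const_loc M x 1 2 1).
      rewrite Rminus_0_r, Rabs_R0. lra.
      lra. intros; apply (gen_one _ _ _ HG0); lra. lra. intros; apply (gen_one _ _ _ (HGl l Hl)); lra.
    + assert (x > 2) by (destruct r0; auto; congruence).
      replace x with ((x - 1) + 1) by ring.
      rewrite (is_derive_unique _ _ _ (gen_deriv _ _ _ (HGl l Hl) (Gl_der l Hl) (x - 1) ltac:(lra))).
      rewrite (is_derive_unique _ _ _ (gen_deriv _ _ _ HG0 inv_der (x - 1) ltac:(lra))).
      apply HD. lra. lra.
Qed.
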